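(* Let $D \in \mathbb{N}$, let $X, Y \subset \mathbb{R}^D$ be finite sets, and let $\mathcal{N}$ be a family of functions $\mathbb{R}^D \to \mathbb{R}$ having the universal approximation property (UAP). If $$\sum_{x \in X} \tau(x) = \sum_{y \in Y} \tau(y) \quad \text{for every } \tau \in \mathcal{N},$$ then $X = Y$.
   Context: A family $\mathcal{N}$ of functions $\mathbb{R}^D \to \mathbb{R}$ has the universal approximation property (UAP) if for every compact set $K \subset \mathbb{R}^D$, every continuous function $f : K \to \mathbb{R}$ and every $\varepsilon > 0$ there is a function $g \in \mathrm{span}(\mathcal{N})$ (a finite linear combination of elements of $\mathcal{N}$) with $\sup_{x \in K} |f(x) - g(x)| \le \varepsilon$. For a function $\tau$ and a finite set $X$, the paper writes $\tau(X)$ for the aggregated value $\sum_{x \in X} \tau(x)$. *)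

(* Defs.v *)
From HB Require Import structures.
From mathcomp Require Import all_boot all_order all_algebra.
From mathcomp Require Import all_classical all_reals all_analysis.
From mathcomp Require Import finmap.
From mathcomp Require Import Rstruct Rstruct_topology.
Set Implicit Arguments. Unset Strict Implicit. Unset Printing Implicit Defensive.
Import Order.TTheory GRing.Theory Num.Theory.
Import numFieldNormedType.Exports.
Local Open Scope classical_set_scope.
Local Open Scope ring_scope.

Notation RD D := 'rV[Rdefinitions.R]_D.

Definition in_span (D : nat) (N : set (RD D -> Rdefinitions.R))
    (g : RD D -> Rdefinitions.R) : Prop :=
  exists (n : nat) (c : 'I_n -> Rdefinitions.R) (f : 'I_n -> (RD D -> Rdefinitions.R)),
    (forall i, N (f i)) /\ (forall x, g x = \sum_(i < n) c i * f i x).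

Definition UAP (D : nat) (N : set (RD D -> Rdefinitions.R)) : Prop :=
  forall (K : set (RD D)) (f : RD D -> Rdefinitions.R) (eps : Rdefinitions.R),
    compact K -> {within K, continuous f} -> 0 < eps ->
    exists g, in_span N g /\ (forall x, K x -> `|f x - g x| <= eps).

(* Main.v *)
Require Import Defs.
From HB Require Import structures.
From mathcomp Require Import all_boot all_order all_algebra.
From mathcomp Require Import all_classical all_reals all_analysis.
From mathcomp Require Import finmap.
From mathcomp Require Import ring.
From mathcomp Require Import Rstruct Rstruct_topology.
Import Order.TTheory GRing.Theory Num.Theory.
Import numFieldNormedType.Exports.
Local Open Scope ring_scope.
Section Aux.
Variable D : nat.
Notation V := 'rV[Rdefinitions.R]_D.
Lemma c1 (a : V) : continuous (fun x : V => `|x - a|).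
Proof.
move=> x.
apply: (continuous_comp (f := fun x : V => x - a)); last exact: norm_continuous.
have h : {for x, continuous ((id : V -> V) - cst a)} by apply: continuousB; [exact: cvg_id | exact: cst_continuous].
exact: h.
Qed.
Lemma prod_cont (s : seq V) (P : pred V) :
  continuous (fun x : V => \prod_(w <- s | P w) `|x - w|).
Proof.
elim: s => [|a s IH] x.
  under eq_fun do rewrite big_nil. exact: cst_continuous.
under eq_fun do rewrite big_cons.
case: (P a); last exact: IH.
move: (continuousM (c1 a x) (IH x)) => h. exact: h.
Qed.
Lemma span_sum (N : set (V -> Rdefinitions.R)) (X Y : {fset V}) g :
  (forall tau, N tau -> \sum_(x <- X) tau x = \sum_(y <- Y) tau y) ->
  in_span N g -> \sum_(x <- X) g x = \sum_(y <- Y) g y.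
Proof.
move=> H [n [c [f [Nf Hg]]]].
under eq_bigr do rewrite Hg. under [RHS]eq_bigr do rewrite Hg.
rewrite exchange_big [RHS]exchange_big /=; apply: eq_bigr => i _.
by rewrite -!mulr_sumr H.
Qed.

Lemma approx_bound (s : seq V) (f g : V -> Rdefinitions.R) eps :
  (forall x, x \in s -> `|f x - g x| <= eps) ->
  `|\sum_(x <- s) f x - \sum_(x <- s) g x| <= (size s)%:R * eps.
Proof.
elim: s => [|a s IH] H; first by rewrite !big_nil subrr normr0 mul0r.
rewrite !big_cons /= -[(size s).+1]/(1 + size s)%N natrD mulrDl mul1r.
have -> : f a + \sum_(j <- s) f j - (g a + \sum_(j <- s) g j)
   = (f a - g a) + (\sum_(j <- s) f j - \sum_(j <- s) g j) by ring.
apply: (le_trans (ler_normD _ _)); apply: lerD.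
  by apply: H; rewrite inE eqxx.
by apply: IH => x xs; apply: H; rewrite inE xs orbT.
Qed.

Lemma cont_sum (N : set (V -> Rdefinitions.R)) (X Y : {fset V}) (f : V -> Rdefinitions.R) :
  UAP N ->
  (forall tau, N tau -> \sum_(x <- X) tau x = \sum_(y <- Y) tau y) ->
  continuous f -> \sum_(x <- X) f x = \sum_(y <- Y) f y.
Proof.
move=> U H cf.
apply/eqP; rewrite -subr_eq0 -normr_le0; apply/ler_addgt0Pr => e e0.
rewrite add0r.
set n : Rdefinitions.R := ((size X + size Y)%:R + 1).
have n0 : 0 < n by rewrite /n ltr_wpDl.
have ep : 0 < e / n by rewrite divr_gt0.
have [g [sg Hg]] := U [set` (X `|` Y)%fset]%classic f (e / n)
  (finite_compact (finite_fset _)) (continuous_subspaceT cf) ep.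
have Eg := @span_sum N X Y g H sg.
have -> : \sum_(x <- X) f x - \sum_(y <- Y) f y =
  (\sum_(x <- X) f x - \sum_(x <- X) g x) - (\sum_(y <- Y) f y - \sum_(y <- Y) g y)
  by rewrite Eg; ring.
apply: (le_trans (ler_normB _ _)).
apply: (@le_trans _ _ ((size X)%:R * (e / n) + (size Y)%:R * (e / n))).
  apply: lerD; apply: approx_bound => x xs; apply: Hg => /=;
  by rewrite in_fsetU xs ?orbT.
rewrite -mulrDl -natrD mulrA ler_pdivrMr // mulrC ler_pM2l //.
by rewrite /n lerDl ler01.
Qed.

Lemma sub_lemma (N : set (V -> Rdefinitions.R)) (X Y : {fset V}) :
  UAP N ->
  (forall tau, N tau -> \sum_(x <- X) tau x = \sum_(y <- Y) tau y) ->
  {subset X <= Y}.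
Proof.
move=> U H z zX; apply/negPn/negP => zY.
pose f := fun x : V => \prod_(w <- (X `|` Y)%fset | w != z) `|x - w|.
have f0 : forall i, i \in (X `|` Y)%fset -> i != z -> f i = 0.
  move=> i iXY iz; apply/eqP; rewrite prodf_seq_eq0; apply/hasP; exists i => //.
  by rewrite iz subrr normr0 eqxx.
have fz : f z != 0.
  rewrite prodf_seq_neq0; apply/allP => w _; apply/implyP => wz.
  by rewrite normr_eq0 subr_eq0 eq_sym.
have := @cont_sum N X Y f U H (prod_cont (X `|` Y)%fset (fun w => w != z)).
rewrite -/f (bigD1_seq z) ?fset_uniq //= big1_seq; last first.
  by move=> i /andP[iz iX]; apply: f0 => //; rewrite in_fsetU iX.
rewrite big1_seq; last first.
  move=> i /= iY; apply: f0; first by rewrite in_fsetU iY orbT.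
  by apply: contraNneq zY => <-.
by rewrite addr0 => /eqP; rewrite (negbTE fz).
Qed.
End Aux.

Theorem theorem1 (D : nat) (X Y : {fset 'rV[Rdefinitions.R]_D})
    (N : set ('rV[Rdefinitions.R]_D -> Rdefinitions.R)) :
  UAP N ->
  (forall tau, N tau -> \sum_(x <- X) tau x = \sum_(y <- Y) tau y) ->
  X = Y.
Proof.
move=> U H; apply/fsetP => z; apply/idP/idP; first exact: (@sub_lemma D N X Y U H).
apply: (@sub_lemma D N Y X U) => tau Nt; by rewrite H.
Qed.
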